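(* Let $G=(V,E)$ be a finite directed acyclic graph with source $S$, run the dissemination protocol below, and fix a slot $t\ge1$ such that the source transmits in slot $t+1$ (i.e. $t+1\le T_S$). Then with probability at least $1-C/q$, where $C$ depends only on $G$, $n$, the rates and $t$, the following implication holds: if $\tau_w\le t$ for every non-source node $w$ and the subspaces $\Pi_w(t)$, $w\in V$, are pairwise distinct, then for every non-source node $u$ and every parent $u_i$ of $u$, the node $u_i$ is the unique node $w\in V$ minimizing $\dim\Pi_w(t)$ among all $w\in V$ with $\Pi^{(u_i)}_u(t+1)\subseteq\Pi_w(t)$. Consequently, the topology of $G$ is uniquely determined by $\{\Pi_w(t)\}_{w\in V}$ together with $\{\Pi^{(u_i)}_u(t+1)\}_{(u_i,u)\in E}$.
   Context: Dissemination protocol: $q$ is a prime power; $G=(V,E)$ is a finite directed acyclic graph without multiple edges, with a source node $S$; each edge $e$ has an integer rate $r_e\ge1$. The source holds $\Pi_S=\mathbb{F}_q^n$ and we set $\Pi_S(s)=\mathbb{F}_q^n$ for all $s$. Time is slotted, $s=1,2,\dots$; vectors sent in slot $s$ are received before the end of slot $s$. In each slot $s\le T_S$ (for some fixed end time $T_S$) the source sends on each outgoing edge $e$ exactly $r_e$ vectors drawn uniformly at random from $\mathbb{F}_q^n$. Each non-source node $v$ has a waiting time $\tau_v$ (possibly random, where the event $\{\tau_v\le s\}$ is determined by what was sent in slots $1,\dots,s$); in each slot $s\ge\tau_v+1$, $v$ sends on each outgoing edge $e$ exactly $r_e$ vectors, each drawn uniformly at random from $\Pi_v(s-1)$. All random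 draws in a slot are mutually independent and independent of the past. $\Pi_v(s)$ is the span of all vectors received by $v$ in slots $1,\dots,s$ ($\Pi_v(0)=\{0\}$), and $\Pi^{(w)}_v(s)$ is the span of all vectors received by $v$ from its parent $w$ in slots $1,\dots,s$. A parent of $u$ is a node $w$ with $(w,u)\in E$. *)

(* Defs.v *)
From HB Require Import structures.
From mathcomp Require Import all_boot all_order all_algebra.
Set Implicit Arguments. Unset Strict Implicit. Unset Printing Implicit Defensive.
Import Order.TTheory GRing.Theory Num.Theory.
Local Open Scope ring_scope.

Definition dag (V : finType) (E : rel V) : Prop :=
  forall x y, E x y -> ~~ connect E y x.

(* Maximal rate; index j of a vector on edge e ranges over j < r_e <= maxrate. *)
Definition maxrate (V : finType) (r : V -> V -> nat) : nat :=
  (\max_(p : V * V) r p.1 p.2)%N.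

(* Index of a transmitted vector: (k, w, u, j) = the j-th vector sent on edge
   (w,u) in slot k+1.  An outcome of the protocol over slots 1..T assigns a
   vector of F^n to every index (indices that are not actually transmitted
   carry the zero vector). *)
Notation index V T R := ('I_T * V * V * 'I_R)%type.
Notation outcome F V n T R := {ffun index V T R -> 'rV[F]_n}.

(* Does w send its j-th vector on (w,u) in slot k+1?  tw = waiting times
   (already evaluated at the outcome). Source sends in slots s <= TS;
   a non-source node w sends in slots s >= tau_w + 1, i.e. tau_w <= k. *)
Definition sends (V : finType) (E : rel V) (S : V) (r : V -> V -> nat)
    (TS : nat) (tw : V -> nat) (k : nat) (w u : V) (j : nat) : bool :=
  [&& E w u, (j < r w u)%N & (if w == S then (k < TS)%N else (tw w <= k)%N)].

Definition recv (F : finFieldType) (V : finType) (n T R : nat) (E : rel V)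
    (S : V) (r : V -> V -> nat) (TS : nat) (tw : V -> nat)
    (om : outcome F V n T R) (W : pred V) (u : V) (s : nat)
    : {vspace 'rV[F]_n} :=
  <<[seq om i | i <- enum [pred i : index V T R |
        [&& (i.1.1.1 < s)%N, W i.1.1.2, i.1.2 == u &
            sends E S r TS tw i.1.1.1 i.1.1.2 i.1.2 i.2]]]>>%VS.

Definition Pi (F : finFieldType) (V : finType) (n T R : nat) (E : rel V)
    (S : V) (r : V -> V -> nat) (TS : nat) (tw : V -> nat)
    (om : outcome F V n T R) (v : V) (s : nat) : {vspace 'rV[F]_n} :=
  if v == S then fullv else recv E S r TS tw om predT v s.

Definition Pi_from (F : finFieldType) (V : finType) (n T R : nat) (E : rel V)
    (S : V) (r : V -> V -> nat) (TS : nat) (tw : V -> nat)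
    (om : outcome F V n T R) (u w : V) (s : nat) : {vspace 'rV[F]_n} :=
  recv E S r TS tw om (pred1 w) u s.

Definition stopping_times (F : finFieldType) (V : finType) (n T R : nat)
    (tau : V -> outcome F V n T R -> nat) : Prop :=
  forall (v : V) (s : nat) (om om' : outcome F V n T R),
    (forall i : index V T R, (i.1.1.1 < s)%N -> om i = om' i) ->
    (tau v om <= s)%N = (tau v om' <= s)%N.

(* Probability of an outcome: product over all transmissions of the
   probability of drawing that vector uniformly from Pi_w(k) (slot k+1 uses
   Pi_w(s-1) = Pi_w(k)); non-transmitted indices carry 0 deterministically. *)
Definition weight (F : finFieldType) (V : finType) (n T R : nat) (E : rel V)
    (S : V) (r : V -> V -> nat) (TS : nat)
    (tau : V -> outcome F V n T R -> nat) (om : outcome F V n T R) : rat :=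
  let tw := fun v => tau v om in
  \prod_(i : index V T R)
    (if sends E S r TS tw i.1.1.1 i.1.1.2 i.1.2 i.2 then
       (if om i \in Pi E S r TS tw om i.1.1.2 i.1.1.1 then
          (#|[pred x : 'rV[F]_n | x \in Pi E S r TS tw om i.1.1.2 i.1.1.1]|%:R)^-1
        else 0)
     else (if om i == 0 then 1 else 0)).

Definition Pr (F : finFieldType) (V : finType) (n T R : nat) (E : rel V)
    (S : V) (r : V -> V -> nat) (TS : nat)
    (tau : V -> outcome F V n T R -> nat) (A : pred (outcome F V n T R)) : rat :=
  \sum_(om | A om) weight E S r TS tau om.

Definition topology_event (F : finFieldType) (V : finType) (n T R : nat)
    (E : rel V) (S : V) (r : V -> V -> nat) (TS : nat)
    (tau : V -> outcome F V n T R -> nat) (t : nat)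
    (om : outcome F V n T R) : bool :=
  let tw := fun v => tau v om in
  let P := Pi E S r TS tw om in
  let PF := Pi_from E S r TS tw om in
  ([forall w, (w != S) ==> (tw w <= t)%N] &&
   [forall w, forall w', (w != w') ==> (P w t != P w' t)])
  ==>
  [forall u, forall p, ((u != S) && E p u) ==>
     ((PF u p t.+1 <= P p t)%VS &&
      [forall w, ((w != p) && (PF u p t.+1 <= P w t)%VS) ==>
                   (\dim (P p t) < \dim (P w t))%N])].

(* Main.v *)
Require Import Defs.
From HB Require Import structures.
From mathcomp Require Import all_boot all_order all_algebra finfield.
Import Order.TTheory GRing.Theory Num.Theory.
Local Open Scope ring_scope.

Section Seqp.
Variables (I D : finType) (lvl : I -> nat) (g : I -> {ffun I -> D} -> D -> rat).
Hypothesis hdep : forall i (om om' : {ffun I -> D}), (forall j, (lvl j < lvl i)%N -> om j = om' j) ->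
  forall x, g i om x = g i om' x.
Hypothesis hge0 : forall i om x, 0 <= g i om x.

Definition agree (A : {set I}) (om0 om : {ffun I -> D}) :=
  [forall j, (j \notin A) ==> (om j == om0 j)].
Definition Ssum A om0 := \sum_(om | agree A om0 om) \prod_(i in A) g i om (om i).
Definition upd (om : {ffun I -> D}) i x : {ffun I -> D} :=
  [ffun j => if j == i then x else om j].

Lemma step (A : {set I}) om0 i : i \in A -> (forall j, j \in A -> lvl j <= lvl i)%N ->
  Ssum A om0 = \sum_(om | agree (A :\ i) om0 om)
                 (\sum_x g i om x) * \prod_(j in A :\ i) g j om (om j).
Proof.
move=> Ai hmax.
rewrite /Ssum (partition_big (fun om : {ffun I -> D} => om i) predT) //=.
under eq_bigr => x _.
  rewrite (reindex_onto (fun om' => upd om' i x) (fun om => upd om i (om0 i))); last first.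
    move=> om /andP[_ /eqP <-]; apply/ffunP => j; rewrite !ffunE.
    by case: (j =P i) => [->|].
  rewrite (eq_bigl (fun om' => agree (A :\ i) om0 om')); last first.
    move=> om'; rewrite /agree.
    have -> : (upd om' i x i == x) = true by rewrite /upd ffunE !eqxx.
    rewrite andbT.
    apply/idP/idP.
      move=> /andP[/forallP h /eqP <-]; apply/forallP => j; rewrite !ffunE.
      case: (j =P i) => [->|/eqP ji]; first by rewrite !eqxx implybT.
      rewrite in_setD1 ji /=; apply/implyP => jA; move: (implyP (h j) jA); by rewrite /upd !ffunE (negbTE ji).
    move=> /forallP h; apply/andP; split.
      apply/forallP => j; apply/implyP => jA; rewrite ffunE.
      have ji : j != i by apply: contraNneq jA => ->.
      rewrite (negbTE ji); apply: (implyP (h j)); by rewrite in_setD1 negb_and jA orbT.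
    apply/eqP/ffunP => j; rewrite !ffunE.
    case: (j =P i) => [->|//]; apply/esym/eqP; apply: (implyP (h i)).
    by rewrite in_setD1 eqxx.
  under eq_bigr => om' _.
    rewrite (bigD1 i) //= ffunE eqxx.
    rewrite (@hdep i _ om'); last first.
      move=> j lj; rewrite ffunE; case: (j =P i) => [ej|//].
      by rewrite ej ltnn in lj.
    rewrite (eq_bigr (fun j => g j om' (om' j))); last first.
      move=> j /andP[jA ji]; rewrite ffunE (negbTE ji).
      apply: hdep => k lk; rewrite ffunE; case: (k =P i) => [ek|//].
      by have := leq_trans lk (hmax j jA); rewrite ek ltnn.
    over.
  over.
rewrite /= exchange_big /=; apply: eq_bigr => om' _.
rewrite mulr_suml; apply: eq_bigr => x _; congr (_ * _); apply: eq_bigl => j; by rewrite in_setD1 andbC.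
Qed.

Lemma agree0 om0 om : agree set0 om0 om = (om == om0).
Proof.
apply/forallP/eqP => [h|->]; last by move=> j; rewrite eqxx implybT.
by apply/ffunP => j; apply/eqP; apply: (implyP (h j)); rewrite in_set0.
Qed.

Lemma Ssum0 om0 : Ssum set0 om0 = 1.
Proof.
rewrite /Ssum (eq_bigl (fun om => om == om0)); last by move=> om; rewrite agree0.
by rewrite big_pred1_eq big_set0.
Qed.

Lemma card_lt (A : {set I}) i : i \in A -> (#|A :\ i| < #|A|)%N.
Proof. by move=> Ai; rewrite (cardsD1 i A) Ai add1n ltnSn. Qed.

Lemma Ssum_le (c : I -> rat) : (forall i, 0 <= c i) ->
  (forall i om, \sum_x g i om x <= c i) ->
  forall (A : {set I}) om0, Ssum A om0 <= \prod_(i in A) c i.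
Proof.
move=> c0 hc A; elim: {A}_.+1 {-2}A (ltnSn #|A|) => // m IH A hA om0.
case: (set_0Vmem A) => [->|[i0 Ai0]]; first by rewrite Ssum0 big_set0.
case: (arg_maxnP lvl Ai0) => i Ai imax.
rewrite (@step A om0 i Ai imax) (bigD1 i Ai) /=.
apply: le_trans (_ : \sum_(om | agree (A :\ i) om0 om)
   c i * \prod_(j in A :\ i) g j om (om j) <= _).
  apply: ler_sum => om _; apply: ler_wpM2r => //.
  by apply: prodr_ge0.
rewrite -mulr_sumr; apply: ler_wpM2l => //.
rewrite (eq_bigl (fun j => j \in A :\ i)); last by move=> j; rewrite in_setD1 andbC.
apply: IH; rewrite -ltnS; apply: leq_trans hA; by rewrite ltnS card_lt.
Qed.

Lemma Ssum_eq1 : (forall i om, \sum_x g i om x = 1) ->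
  forall (A : {set I}) om0, Ssum A om0 = 1.
Proof.
move=> hc A; elim: {A}_.+1 {-2}A (ltnSn #|A|) => // m IH A hA om0.
case: (set_0Vmem A) => [->|[i0 Ai0]]; first by rewrite Ssum0.
case: (arg_maxnP lvl Ai0) => i Ai imax.
rewrite (@step A om0 i Ai imax).
under eq_bigr => om _ do rewrite hc mul1r.
apply: IH; rewrite -ltnS; apply: leq_trans hA; by rewrite ltnS card_lt.
Qed.

Lemma SsumT om0 : Ssum setT om0 = \sum_(om : {ffun I -> D}) \prod_i g i om (om i).
Proof.
rewrite /Ssum; apply: eq_big => [om|om _].
  by apply/forallP => j; rewrite in_setT.
by apply: eq_bigl => j; rewrite in_setT.
Qed.

Lemma total_eq1 (d0 : D) : (forall i om, \sum_x g i om x = 1) ->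
  \sum_(om : {ffun I -> D}) \prod_i g i om (om i) = 1.
Proof. by move=> hc; rewrite -(SsumT [ffun=> d0]) Ssum_eq1. Qed.

Lemma total_le (d0 : D) (c : I -> rat) : (forall i, 0 <= c i) ->
  (forall i om, \sum_x g i om x <= c i) ->
  \sum_(om : {ffun I -> D}) \prod_i g i om (om i) <= \prod_i c i.
Proof.
move=> c0 hc; rewrite -(SsumT [ffun=> d0]).
rewrite [X in _ <= X](eq_bigl (fun j => j \in setT)); first exact: Ssum_le.
by move=> j; rewrite in_setT.
Qed.
End Seqp.

Section Proto.
Variables (F : finFieldType) (V : finType) (E : rel V) (S : V) (n T R : nat)
  (r : V -> V -> nat) (TS : nat) (tau : V -> outcome F V n T R -> nat).
Hypothesis hst : stopping_times tau.

Local Notation I := ('I_T * V * V * 'I_R)%type.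
Local Notation Om := (outcome F V n T R).
Local Notation tw om := (fun v => tau v om).
Definition lvl (i : I) : nat := i.1.1.1.
Local Notation PP om := (Pi E S r TS (tw om) om).

Definition gg (i : I) (om : Om) (x : 'rV[F]_n) : rat :=
  if sends E S r TS (tw om) i.1.1.1 i.1.1.2 i.1.2 i.2 then
    (if x \in PP om i.1.1.2 i.1.1.1 then
       (#|[pred y : 'rV[F]_n | y \in PP om i.1.1.2 i.1.1.1]|%:R)^-1 else 0)
  else (if x == 0 then 1 else 0).

Lemma weightE om : weight E S r TS tau om = \prod_i gg i om (om i).
Proof. by []. Qed.

Lemma dep_sends (om om' : Om) s : (forall j, (lvl j < s)%N -> om j = om' j) ->
  forall k, (k <= s)%N -> forall w u jj,
  sends E S r TS (tw om) k w u jj = sends E S r TS (tw om') k w u jj.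
Proof.
move=> h k ks w u jj; rewrite /sends (hst w k om om') //.
by move=> j hj; apply: h; apply: leq_trans hj ks.
Qed.

Lemma dep_recv (W : pred V) (om om' : Om) s : (forall j, (lvl j < s)%N -> om j = om' j) ->
  forall k, (k <= s)%N -> forall u,
  recv E S r TS (tw om) om W u k = recv E S r TS (tw om') om' W u k.
Proof.
move=> h k ks u; rewrite /recv.
have -> : enum [pred i : I | [&& (i.1.1.1 < k)%N, W i.1.1.2, i.1.2 == u &
            sends E S r TS (tw om) i.1.1.1 i.1.1.2 i.1.2 i.2]] =
          enum [pred i : I | [&& (i.1.1.1 < k)%N, W i.1.1.2, i.1.2 == u &
            sends E S r TS (tw om') i.1.1.1 i.1.1.2 i.1.2 i.2]].
  apply: eq_enum => i; rewrite !inE.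
  case ik: (i.1.1.1 < k)%N => //=.
  rewrite (@dep_sends om om' s h) //; exact: leq_trans (ltnW ik) ks.
apply: f_equal.
apply/eq_in_map => i; rewrite mem_enum inE => /andP[ik _].
apply: h; exact: leq_trans ik ks.
Qed.

Lemma dep_Pi (om om' : Om) s : (forall j, (lvl j < s)%N -> om j = om' j) ->
  forall k, (k <= s)%N -> forall v, PP om v k = PP om' v k.
Proof. by move=> h k ks v; rewrite /Pi (@dep_recv predT om om' s h k ks). Qed.

Lemma gg_dep i (om om' : Om) : (forall j, (lvl j < lvl i)%N -> om j = om' j) ->
  forall x, gg i om x = gg i om' x.
Proof. by move=> h x; rewrite /gg (@dep_sends om om' _ h) // (@dep_Pi om om' _ h). Qed.

Lemma gg_ge0 i om x : 0 <= gg i om x.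
Proof. by rewrite /gg; case: ifP => _; case: ifP => _ //; rewrite invr_ge0 ler0n. Qed.

Lemma gg_sum1 i om : \sum_x gg i om x = 1.
Proof.
rewrite /gg; case: (sends _ _ _ _ _ _ _ _ _) => /=; last first.
  by rewrite (bigD1 0) //= ?eqxx big1 ?addr0 // => x /negbTE ->.
rewrite -big_mkcond /= sumr_const.
set c := #|_|.
have c0 : (0 < c)%N by apply/card_gt0P; exists 0; exact: mem0v.
by rewrite -[X in X = 1]mulr_natr mulVf // pnatr_eq0 -lt0n.
Qed.

Lemma Pi_mono om v k k' : (k <= k')%N -> (PP om v k <= PP om v k')%VS.
Proof.
move=> kk; rewrite /Pi; case: (v == S) => //.
rewrite /recv; apply/span_subvP => x /mapP[i]; rewrite mem_enum inE => /and4P[ik a b c] ->.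
apply: memv_span; apply: map_f; rewrite mem_enum inE.
by rewrite a b c (leq_trans ik kk).
Qed.

Lemma wmem om (i : I) : weight E S r TS tau om != 0 ->
  sends E S r TS (tw om) i.1.1.1 i.1.1.2 i.1.2 i.2 ->
  om i \in PP om i.1.1.2 i.1.1.1.
Proof.
rewrite weightE => /prodf_neq0 /(_ i isT) + hs; rewrite /gg hs.
by case: ifP => //; rewrite eqxx.
Qed.

Definition h0 (i0 : I) (w : V) (om : Om) (x : 'rV[F]_n) : bool :=
  [&& sends E S r TS (tw om) (lvl i0) i0.1.1.2 i0.1.2 i0.2,
      ~~ (PP om i0.1.1.2 (lvl i0) <= PP om w (lvl i0))%VS &
      x \in PP om w (lvl i0)].

Definition gb i0 w (i : I) (om : Om) (x : 'rV[F]_n) : rat :=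
  if i == i0 then (if h0 i0 w om x then gg i om x else 0) else gg i om x.

Lemma h0_dep i0 w (om om' : Om) : (forall j, (lvl j < lvl i0)%N -> om j = om' j) ->
  forall x, h0 i0 w om x = h0 i0 w om' x.
Proof.
by move=> h x; rewrite /h0 (@dep_sends om om' _ h) // !(@dep_Pi om om' _ h).
Qed.

Lemma gb_dep i0 w i (om om' : Om) : (forall j, (lvl j < lvl i)%N -> om j = om' j) ->
  forall x, gb i0 w i om x = gb i0 w i om' x.
Proof.
move=> h x; rewrite /gb (@gg_dep i om om' h); case: (i =P i0) => // e.
by rewrite (@h0_dep i0 w om om') // -e.
Qed.

Lemma gb_ge0 i0 w i om x : 0 <= gb i0 w i om x.
Proof. by rewrite /gb; do 2?case: ifP => _; rewrite ?gg_ge0. Qed.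

Lemma card_cap (U W : {vspace 'rV[F]_n}) : ~~ (U <= W)%VS ->
  (#|[pred x | (x \in W) && (x \in U)]| * #|F| <= #|[pred x | x \in U]|)%N.
Proof.
move=> nUW.
have -> : #|[pred x | (x \in W) && (x \in U)]| = #|(U :&: W)%VS|.
  by apply: eq_card => x; rewrite inE memv_cap andbC.
have -> : #|[pred x | x \in U]| = #|U| by apply: eq_card.
rewrite !card_vspace -expnSr leq_exp2l ?finRing_gt1 //.
rewrite (ltn_leqif (dimv_leqif_eq (capvSl U W))).
by apply: contra nUW => /eqP/capv_idPl.
Qed.

Lemma gb_sum i0 w i om :
  \sum_x gb i0 w i om x <= (if i == i0 then (#|F|%:R)^-1 else 1).
Proof.
rewrite /gb; case: (i =P i0) => [->|_]; last by rewrite gg_sum1.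
rewrite /h0 /gg /lvl.
case hs: (sends _ _ _ _ _ _ _ _ _) => /=; last first.
  by rewrite big1 ?invr_ge0 ?ler0n.
case sub: (_ <= _)%VS => /=.
  by rewrite big1 ?invr_ge0 ?ler0n.
set Pp := PP om i0.1.1.2 i0.1.1.1; set Pw := PP om w i0.1.1.1.
rewrite (eq_bigr (fun x => if (x \in Pw) && (x \in Pp) then
   (#|[pred y | y \in Pp]|%:R)^-1 else 0)); last first.
  by move=> x _; case: (x \in Pw); case: (x \in Pp).
rewrite -big_mkcond /= sumr_const.
have cF : (0 < #|F|)%N by apply: ltnW; apply: finRing_gt1.
have cP : (0 < #|[pred y | y \in Pp]|)%N.
  by apply/card_gt0P; exists 0; exact: mem0v.
rewrite -[X in X <= _]mulr_natl ler_pdivrMr ?ltr0n // mulrC ler_pdivlMr ?ltr0n //.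
rewrite -natrM ler_nat.
have := @card_cap Pp Pw (negbT sub); apply: leq_trans; rewrite leq_mul2r; apply/orP; right.
by apply: subset_leq_card; apply/subsetP => x; rewrite !inE.
Qed.

Lemma prod_gb i0 w om : \prod_i gb i0 w i om (om i) =
  if h0 i0 w om (om i0) then weight E S r TS tau om else 0.
Proof.
rewrite weightE (bigD1 i0) //= [in RHS](bigD1 i0) //= /gb eqxx.
rewrite (eq_bigr (fun i => gg i om (om i))) => [| i /negbTE ->] //.
by case: ifP; rewrite ?mul0r.
Qed.

Lemma bad_bound i0 w :
  \sum_(om : Om) (if h0 i0 w om (om i0) then weight E S r TS tau om else 0)
    <= (#|F|%:R)^-1.
Proof.
under eq_bigr do rewrite -prod_gb.
pose c := fun i : I => if i == i0 then (#|F|%:R)^-1 else (1 : rat).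
have c0 : forall i, 0 <= c i by move=> i; rewrite /c; case: ifP; rewrite ?invr_ge0 ?ler0n.
apply: le_trans (@total_le _ _ lvl (gb i0 w) (@gb_dep i0 w) (@gb_ge0 i0 w) 0 c c0 (@gb_sum i0 w)) _.
rewrite (bigD1 i0) //= big1 ?mulr1 /c ?eqxx //.
by move=> i /negbTE ->.
Qed.

Lemma main t om : (t < T)%N -> (t < TS)%N ->
  (forall x y, E x y -> 0 < r x y)%N -> (forall x y, r x y <= R)%N ->
  weight E S r TS tau om != 0 -> (forall i0 w, ~~ h0 i0 w om (om i0)) ->
  topology_event E S r TS tau t om.
Proof.
move=> ht htS hr hR hw hb.
rewrite /topology_event; cbv zeta beta.
apply/implyP => /andP[/forallP hW /forallP hD].
apply/forallP => u; apply/forallP => p; apply/implyP => /andP[uS Epu].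
have sub1 : (Pi_from E S r TS (tw om) om u p t.+1 <= PP om p t)%VS.
  rewrite /Pi_from /recv; apply/span_subvP => v /mapP[i].
  rewrite mem_enum inE => /and4P[ik /eqP ip /eqP iu isend] ->.
  apply: (subvP (@Pi_mono om p i.1.1.1 t ik)); rewrite -ip; exact: wmem.
apply/andP; split; first exact: sub1.
apply/forallP => w; apply/implyP => /andP[wp sub2].
have R0 : (0 < R)%N := leq_trans (hr _ _ Epu) (hR p u).
pose i0 : I := (Ordinal ht, p, u, Ordinal R0).
have s0 : sends E S r TS (tw om) t p u 0.
  rewrite /sends Epu (hr _ _ Epu) /=; case: ifP => pS //.
  exact: (implyP (hW p) (negbT pS)).
have m0 : om i0 \in PP om w t.
  apply: (subvP sub2); apply: memv_span; apply: map_f; rewrite mem_enum inE /=.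
  by rewrite ltnSn !eqxx s0.
have sub3 : (PP om p t <= PP om w t)%VS.
  by move: (hb i0 w); rewrite /h0 /= s0 m0 andbT negbK.
have neq : PP om p t != PP om w t.
  by have := implyP (forallP (hD p) w); rewrite eq_sym wp; apply.
by rewrite (ltn_leqif (dimv_leqif_eq sub3)).
Qed.
End Proto.

Arguments h0 {F V E S n T R r TS tau}.
Arguments main {F V E S n T R r TS tau t om}.
Arguments bad_bound {F V E S n T R r TS tau} hst.

Theorem theorem4 (V : finType) (E : rel V) (S : V) (n : nat)
    (r : V -> V -> nat) (t : nat) :
  dag E ->
  (forall w, ~~ E w S) ->
  (forall x y, E x y -> (0 < r x y)%N) ->
  (1 <= t)%N ->
  exists C : rat,
    forall (F : finFieldType) (TS : nat)
           (tau : V -> outcome F V n t.+1 (maxrate r) -> nat),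
      (t.+1 <= TS)%N ->
      stopping_times tau ->
      1 - C / (#|F|%:R) <= Pr E S r TS tau (topology_event E S r TS tau t).
Proof.
move=> _ _ hr _.
exists (#|{: ('I_t.+1 * V * V * 'I_(maxrate r)) * V}|%:R).
move=> F TS tau hTS hst.
have hR : forall x y, (r x y <= maxrate r)%N.
  by move=> x y; exact: (@leq_bigmax _ (fun p : V * V => r p.1 p.2) (x, y)).
have tot : \sum_(om : outcome F V n t.+1 (maxrate r)) weight E S r TS tau om = 1.
  under eq_bigr do rewrite weightE.
  exact: (@total_eq1 _ _ _ _ (@gg_dep F V E S n t.+1 (maxrate r) r TS tau hst)
            (0 : 'rV[F]_n)
            (@gg_sum1 F V E S n t.+1 (maxrate r) r TS tau)).
have W0 : forall om : outcome F V n t.+1 (maxrate r), 0 <= weight E S r TS tau om.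
  by move=> om; rewrite weightE; apply: prodr_ge0 => i _; exact: gg_ge0.
pose hb := fun (p : ('I_t.+1 * V * V * 'I_(maxrate r)) * V) (om : outcome F V n t.+1 (maxrate r)) =>
  @h0 F V E S n t.+1 (maxrate r) r TS tau p.1 p.2 om (om p.1).
have bad : \sum_(om | ~~ topology_event E S r TS tau t om) weight E S r TS tau om
    <= #|{: ('I_t.+1 * V * V * 'I_(maxrate r)) * V}|%:R / #|F|%:R.
  apply: le_trans (_ : \sum_(om : outcome F V n t.+1 (maxrate r))
     \sum_(p : ('I_t.+1 * V * V * 'I_(maxrate r)) * V)
        (if hb p om then weight E S r TS tau om else 0) <= _).
    rewrite [X in X <= _]big_mkcond /=; apply: ler_sum => om _.
    have S0 : 0 <= \sum_(p : ('I_t.+1 * V * V * 'I_(maxrate r)) * V)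
        (if hb p om then weight E S r TS tau om else 0).
      by apply: sumr_ge0 => p _; case: ifP.
    case: ifP => htop //.
    case: (weight E S r TS tau om =P 0) => [->|/eqP wn].
      by apply: sumr_ge0 => p _; case: ifP.
    case: (pickP (fun p : ('I_t.+1 * V * V * 'I_(maxrate r)) * V =>
                    hb p om)) => [p hp | none].
      rewrite (bigD1 p) //= hp lerDl; apply: sumr_ge0 => q _; by case: ifP.
    exfalso; move/negP: htop; apply; apply: (main (ltnSn t) hTS hr hR wn) => i0 w.
    by have := none (i0, w); rewrite /hb /= => ->.
  rewrite exchange_big /=.
  apply: le_trans (_ : \sum_(p : ('I_t.+1 * V * V * 'I_(maxrate r)) * V)
                          (#|F|%:R)^-1 <= _).
    by apply: ler_sum => p _; exact: (bad_bound hst).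
  by rewrite sumr_const mulr_natl.
rewrite /Pr -[X in X - _ <= _]tot (bigID (topology_event E S r TS tau t)) /=.
rewrite -addrA gerDl subr_le0; exact: bad.
Qed.
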